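(* Let $\mathbf{x}_0$ be a random vector in $\mathbb{R}^n$ with distribution $p(\mathbf{x}_0)$, let $\mathcal E:\mathbb{R}^n\to\mathbb{R}^k$ be an encoder and set $\mathbf{z}_0=\mathcal E(\mathbf{x}_0)$. Let $\mathbf{y}$ be a measurement with conditional distribution $p(\mathbf{y}\mid\mathbf{x}_0)$, and for each time $t$ let $\mathbf{z}_t=\mathbf{z}_0+\sigma_t\boldsymbol{\epsilon}_t$ with $\boldsymbol{\epsilon}_t\sim\mathcal N(\mathbf{0},\mathbf{I})$, where, given $\mathbf{x}_0$, the variables $\mathbf{y}$ and the $\mathbf{z}_t$ for different $t$ are mutually conditionally independent (so $p(\mathbf{z}_t\mid\mathbf{x}_0)=p(\mathbf{z}_t\mid\mathbf{z}_0)=\mathcal N(\mathbf{z}_t;\mathcal E(\mathbf{x}_0),\sigma_t^2\mathbf{I})$). Fix times $t_1,t_2$ and a value of $\mathbf{y}$, and suppose $\mathbf{z}_{t_1}$ is sampled from the time-marginal $p(\mathbf{z}_{t_1}\mid\mathbf{y})$. Then: (i) if $\mathbf{x}_0\sim p(\mathbf{x}_0\mid\mathbf{z}_{t_1},\mathbf{y})$ and then $\mathbf{z}_{t_2}\sim\mathcal N(\mathcal E(\mathbf{x}_0),\sigma_{t_2}^2\mathbf{I})$, i.e. $\mathbf{z}_{t_2}\sim\mathbb E_{\mathbf{x}_0\sim p(\mathbf{x}_0\mid\mathbf{z}_{t_1},\mathbf{y})}[\mathcal N(\mathcal E(\mathbf{x}_0),\sigma_{t_2}^2\mathbf{I})]$,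 then $\mathbf{z}_{t_2}$ is distributed according to $p(\mathbf{z}_{t_2}\mid\mathbf{y})$; (ii) if $\mathbf{z}_0\sim p(\mathbf{z}_0\mid\mathbf{z}_{t_1},\mathbf{y})$ and then $\mathbf{z}_{t_2}\sim\mathcal N(\mathbf{z}_0,\sigma_{t_2}^2\mathbf{I})$, i.e. $\mathbf{z}_{t_2}\sim\mathbb E_{\mathbf{z}_0\sim p(\mathbf{z}_0\mid\mathbf{z}_{t_1},\mathbf{y})}[\mathcal N(\mathbf{z}_0,\sigma_{t_2}^2\mathbf{I})]$, then $\mathbf{z}_{t_2}$ is also distributed according to $p(\mathbf{z}_{t_2}\mid\mathbf{y})$.
   Context: $\sigma_t\ge 0$ is a noise schedule (noise standard deviation at time $t$); $\mathcal N(\mathbf{m},0\cdot\mathbf{I})$ is understood as the point mass at $\mathbf{m}$. This is the latent-diffusion setting: $\mathbf{z}_t$ is the latent code of clean data perturbed by Gaussian noise of variance $\sigma_t^2$. All conditional distributions $p(\cdot\mid\cdot)$ are those of the joint distribution just described; $p(\mathbf{z}_t\mid\mathbf{y})$ is the conditional law of $\mathbf{z}_t$ given $\mathbf{y}$. *)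

(* Defs.v *)
From HB Require Import structures.
From mathcomp Require Import all_boot all_order all_algebra.
From mathcomp Require Import all_classical all_reals all_analysis.
From mathcomp Require Import measurable_realfun.
Set Implicit Arguments.
Unset Strict Implicit.
Unset Printing Implicit Defensive.
Import Order.TTheory GRing.Theory Num.Theory.
Local Open Scope classical_set_scope.
Local Open Scope ring_scope.

(* Vectors of R^k are represented as k.-tuple R, which carries the product
   (Borel) sigma-algebra generated by the coordinate projections. *)
Definition vadd (R : realType) (k : nat) (a b : k.-tuple R) : k.-tuple R :=
  [tuple tnth a i + tnth b i | i < k].
Definition vscale (R : realType) (k : nat) (s : R) (a : k.-tuple R) : k.-tuple R :=
  [tuple s * tnth a i | i < k].

(* g is the standard Gaussian N(0, I) on R^k: the product of k copies of the
   standard normal law (characterized on measurable boxes, a generating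
   pi-system of the product sigma-algebra). *)
Definition std_gaussian (R : realType) (k : nat) (g : set (k.-tuple R) -> \bar R) :=
  forall B : 'I_k -> set R, (forall i, measurable (B i)) ->
    g [set e | forall i, B i (tnth e i)] = (\prod_(i < k) normal_prob 0 1 (B i))%E.

(* N(m, s^2 I)(B), as the law of m + s * eps with eps ~ g = N(0, I);
   for s = 0 this is the point mass at m. *)
Definition gaussN (R : realType) (k : nat) (g : set (k.-tuple R) -> \bar R)
  (m : k.-tuple R) (s : R) (B : set (k.-tuple R)) : \bar R :=
  g [set e | B (vadd m (vscale s e))].

(* kappa is (a version of) the conditional distribution of W given V under P:
   a (measurable) kernel such that P(V in C, W in B) = \int_C kappa v B dP_V(v). *)
Definition is_cond_law d (Omega : measurableType d) (R : realType)
  (P : probability Omega R) dV (TV : measurableType dV) dW (TW : measurableType dW)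
  (V : Omega -> TV) (W : Omega -> TW) (kappa : TV -> set TW -> \bar R) : Prop :=
  (forall B, measurable B -> measurable_fun [set: TV] (kappa^~ B)) /\
  (forall (C : set TV) (B : set TW), measurable C -> measurable B ->
     P (V @^-1` C `&` W @^-1` B) = (\int[pushforward P V]_(v in C) kappa v B)%E).

(* The latent-diffusion model: x0 ~ p(x0), y ~ kY x0 = p(y | x0), and given x0
   the variables y and (z_t)_t are mutually conditionally independent with
   z_t | x0 ~ N(Enc x0, sigma_t^2 I).  Stated as the disintegration of the
   joint law of (x0, y, z_t1, ..., z_tm) for every finite family of distinct
   times. *)
Definition latent_model d (Omega : measurableType d) (R : realType)
  (P : probability Omega R) (n k : nat) dY (TY : measurableType dY) (Tm : eqType)
  (sigma : Tm -> R) (X0 : Omega -> n.-tuple R) (Y : Omega -> TY)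
  (Z : Tm -> Omega -> k.-tuple R) (Enc : n.-tuple R -> k.-tuple R)
  (g : set (k.-tuple R) -> \bar R) (kY : n.-tuple R -> set TY -> \bar R) : Prop :=
  forall (s : seq Tm), uniq s ->
  forall (A : set (n.-tuple R)) (C : set TY) (B : Tm -> set (k.-tuple R)),
    measurable A -> measurable C -> (forall t, measurable (B t)) ->
    P (X0 @^-1` A `&` Y @^-1` C `&` [set w | forall t, t \in s -> B t (Z t w)])
    = (\int[pushforward P X0]_(x in A)
         (kY x C * \prod_(t <- s) gaussN g (Enc x) (sigma t) (B t)))%E.

(* Main.v *)
Require Import Defs.
From HB Require Import structures.
From mathcomp Require Import all_boot all_order all_algebra.
From mathcomp Require Import all_classical all_reals all_analysis.
From mathcomp Require Import measurable_realfun.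
Import Order.TTheory GRing.Theory Num.Theory.
Local Open Scope classical_set_scope.
Local Open Scope ring_scope.
Section mix.
Local Open Scope ereal_scope.
Context d1 d2 (X : measurableType d1) (Z : measurableType d2) (R : realType).
Variables (mu : {measure set X -> \bar R}) (c : X -> \bar R)
  (l : X -> {measure set Z -> \bar R}) (nu : {measure set Z -> \bar R}).
Hypothesis c0 : forall x, 0 <= c x.
Hypothesis cfin : forall x, c x \is a fin_num.
Hypothesis mc : measurable_fun setT c.
Hypothesis ml : forall U, measurable U -> measurable_fun setT (l ^~ U).
Hypothesis hnu : forall U, measurable U -> nu U = \int[mu]_x (c x * l x U).

Import HBNNSimple.

Let mix_nnsfun (h : {nnsfun Z >-> R}) :
  \int[nu]_z (h z)%:E = \int[mu]_x (c x * \int[l x]_z (h z)%:E).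
Proof.
transitivity (\int[mu]_x (\sum_(r \in range h)
   r%:E * (c x * l x (h @^-1` [set r])))); last first.
  apply: eq_integral => x _; rewrite integralT_nnsfun sintegralE ge0_mule_fsumr.
    by apply: eq_fsbigr => r _; rewrite muleCA.
  by move=> r; exact: nnsfun_mulemu_ge0.
rewrite ge0_integral_fsum //; last 2 first.
- move=> r; apply: measurable_funeM; apply: emeasurable_funM => //.
  exact: ml.
- by move=> r x _; rewrite muleCA; apply: mule_ge0 => //; exact: nnsfun_mulemu_ge0.
rewrite integralT_nnsfun sintegralE.
apply: eq_fsbigr => r /set_mem [z _ <-].
rewrite hnu // ge0_integralZl //.
- by apply: emeasurable_funM => //; exact: ml.
- by move=> x _; apply: mule_ge0.
- by rewrite lee_fin.
Qed.

Lemma mix_integral f : (forall z, 0 <= f z) -> measurable_fun setT f ->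
  \int[nu]_z f z = \int[mu]_x (c x * \int[l x]_z f z).
Proof.
move=> f0 mf.
pose f_ := nnsfun_approx measurableT mf.
have cvf z : (fun n => (f_ n z)%:E) @ \oo --> f z.
  exact: cvg_nnsfun_approx.
have intE (m : {measure set Z -> \bar R}) :
    \int[m]_z f z = limn (fun n => \int[m]_z (f_ n z)%:E).
  rewrite -monotone_convergence//.
  - by apply: eq_integral => z _; apply/esym/cvg_lim => //; exact: cvf.
  - by move=> n; exact/measurable_EFinP.
  - by move=> n z _; rewrite lee_fin.
  - by move=> z _ a b ab; rewrite lee_fin; exact/lefP/nd_nnsfun_approx.
rewrite intE.
under eq_fun do rewrite mix_nnsfun.
rewrite -monotone_convergence//; last 3 first.
- move=> n; apply: emeasurable_funM => //.
  apply: measurable_fun_integral_kernel => //.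
  + by move=> z; rewrite lee_fin.
  + exact/measurable_EFinP.
- by move=> n x _; apply: mule_ge0 => //; apply: integral_ge0 => z _; rewrite lee_fin.
- move=> x _ a b ab; apply: lee_wpmul2l => //; apply: ge0_le_integral => //.
  + by move=> z _; rewrite lee_fin.
  + exact/measurable_EFinP.
  + exact/measurable_EFinP.
  + by move=> z _; rewrite lee_fin; exact/lefP/nd_nnsfun_approx.
apply: eq_integral => x _; rewrite intE limeMl //.
apply: ereal_nondecreasing_is_cvgn => a b ab; apply: ge0_le_integral => //.
+ by move=> z _; rewrite lee_fin.
+ exact/measurable_EFinP.
+ exact/measurable_EFinP.
+ by move=> z _; rewrite lee_fin; exact/lefP/nd_nnsfun_approx.
Qed.

End mix.
Arguments mix_integral {d1 d2 X Z R mu c l nu}.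
Section mixm.
Local Open Scope ereal_scope.
Context d1 d2 (X : measurableType d1) (Z : measurableType d2) (R : realType).
Variables (mu : {measure set X -> \bar R}) (c : X -> \bar R)
  (l : X -> {measure set Z -> \bar R}).
Hypothesis c0 : forall x, 0 <= c x.
Hypothesis cfin : forall x, c x \is a fin_num.
Hypothesis mc : measurable_fun setT c.
Hypothesis ml : forall U, measurable U -> measurable_fun setT (l ^~ U).

Definition mixm_fun (U : set Z) := \int[mu]_x (c x * l x U).

Let mixm0 : mixm_fun set0 = 0.
Proof. by rewrite /mixm_fun; under eq_integral do rewrite measure0 mule0; rewrite integral0. Qed.

Let mixm_ge0 U : 0 <= mixm_fun U.
Proof. by apply: integral_ge0 => x _; apply: mule_ge0. Qed.

Let mixm_sa : semi_sigma_additive mixm_fun.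
Proof.
move=> F mF tF mU.
have -> : mixm_fun (\bigcup_n F n) = \sum_(n <oo) mixm_fun (F n).
  rewrite /mixm_fun -integral_nneseries //; last 2 first.
  - by move=> n; apply: emeasurable_funM => //; exact: ml.
  - by move=> n x _; apply: mule_ge0.
  apply: eq_integral => x _.
  rewrite -(cvg_lim _ (measure_semi_sigma_additive _ mF tF mU)) //.
  by rewrite -[c x]fineK // -nneseriesZl.
exact: is_cvg_nneseries.
Qed.

HB.instance Definition _ := isMeasure.Build _ _ _ mixm_fun mixm0 mixm_ge0 mixm_sa.

Definition mixm : {measure set Z -> \bar R} := mixm_fun.

Lemma mixmE U : mixm U = \int[mu]_x (c x * l x U).
Proof. by []. Qed.

End mixm.
Arguments mixm {d1 d2 X Z R} mu c l c0 cfin mc ml.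
Section prod_unique.
Local Open Scope ereal_scope.
Context d1 d2 (T1 : measurableType d1) (T2 : measurableType d2) (R : realType).

Lemma prod_measure_eq (m1 m2 : {measure set (T1 * T2) -> \bar R}) :
  m1 setT < +oo ->
  (forall A B, measurable A -> measurable B -> m1 (A `*` B) = m2 (A `*` B)) ->
  forall X, measurable X -> m1 X = m2 X.
Proof.
move=> m1oo m12.
pose C : set (set (T1 * T2)) :=
  [set C | exists A, measurable A /\ exists B, measurable B /\ C = A `*` B].
have CI : setI_closed C.
  move=> /= _ _ [X1 [mX1 [X2 [mX2 ->]]]] [Y1 [mY1 [Y2 [mY2 ->]]]].
  rewrite -setXI; exists (X1 `&` Y1); split; first exact: measurableI.
  by exists (X2 `&` Y2); split => //; exact: measurableI.
move=> X mX; apply: (measure_unique C (fun n => setT)) => //.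
- rewrite measurable_prod_measurableType //; congr (<<s _ >>).
  rewrite predeqE; split => [[A mA [B mB <-]]|[A [mA [B [mB ->]]]]].
    by exists A; split => //; exists B.
  by exists A => //; exists B.
- by move=> n; exists setT; split => //; exists setT; split => //; rewrite setXTT.
- by rewrite bigcup_const.
- by move=> _ [A [mA [B [mB ->]]]]; exact: m12.
Qed.

End prod_unique.

Definition pushf d1 d2 (T1 : measurableType d1) (T2 : measurableType d2)
  (R : realType) (m : {measure set T1 -> \bar R}) (f : T1 -> T2)
  (mf : measurable_fun setT f) : {measure set T2 -> \bar R}.
Proof. refine (pushforward m f : {measure set T2 -> \bar R}); exact: mf. Defined.
Arguments pushf {d1 d2 T1 T2 R} m {f} mf.

Lemma pushfE d1 d2 (T1 : measurableType d1) (T2 : measurableType d2)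
  (R : realType) (m : {measure set T1 -> \bar R}) (f : T1 -> T2)
  (mf : measurable_fun setT f) A : pushf m mf A = m (f @^-1` A).
Proof. by []. Qed.
Section qker.
Local Open Scope ereal_scope.
Context d d' (X : measurableType d) (Y : measurableType d') (R : realType).
Variable q : X -> probability Y R.
Definition kq (mq : forall U, measurable U -> measurable_fun [set: X] (fun x => q x U))
  : X -> {measure set Y -> \bar R} := fun x => q x.
Hypothesis mq : forall U, measurable U -> measurable_fun [set: X] (fun x => q x U).
HB.instance Definition _ := isKernel.Build _ _ X Y R (kq mq) mq.
Let kq1 x : kq mq x setT = 1. Proof. exact: probability_setT. Qed.
HB.instance Definition _ := Kernel_isProbability.Build _ _ X Y R (kq mq) kq1.

Lemma measurable_int_q (k : X * Y -> \bar R) : (forall z, 0 <= k z) ->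
  measurable_fun setT k -> measurable_fun setT (fun x => \int[q x]_y k (x, y)).
Proof. move=> k0 mk; exact: (measurable_fun_integral_finite_kernel k (kq mq)). Qed.
End qker.
Arguments measurable_int_q {d d' X Y R q} mq k.
Lemma measurable_gaussN (R : realType) (k : nat) (g : probability (k.-tuple R) R)
  (s : R) (B : set (k.-tuple R)) : measurable B ->
  measurable_fun setT (fun m => gaussN g m s B).
Proof.
move=> mB.
pose D := [set me : k.-tuple R * k.-tuple R | B (vadd me.1 (vscale s me.2))].
have mf : measurable_fun setT
    (fun me : k.-tuple R * k.-tuple R => vadd me.1 (vscale s me.2)).
  apply/measurable_fun_tnthP => i.
  rewrite (_ : _ \o _ = fun me : k.-tuple R * k.-tuple R =>
     tnth me.1 i + s * tnth me.2 i); last first.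
    by apply/funext => me /=; rewrite /vadd /vscale !tnth_mktuple.
  apply: measurable_funD.
    exact: measurableT_comp (measurable_tnth i) measurable_fst.
  apply: measurable_funM => //.
  exact: measurableT_comp (measurable_tnth i) measurable_snd.
have mD : measurable D by rewrite -[D]setTI; exact: mf.
have := measurable_fun_xsection g mD.
congr measurable_fun; apply/funext => m /=.
rewrite /gaussN; congr (g _); apply/seteqP; split => e;
  by rewrite /xsection /= inE.
Qed.
Lemma int_in_indic d (T : measurableType d) (R : realType)
  (mu : {measure set T -> \bar R}) (D : set T) (f : T -> \bar R) :
  (\int[mu]_(x in D) f x = \int[mu]_x ((\1_D x)%:E * f x))%E.
Proof.
rewrite integral_mkcond; apply: eq_integral => x _.
rewrite /patch indicE; case: ifPn => _; by rewrite ?mul1e ?mul0e.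
Qed.

Lemma RP d d' (T : measurableType d) (T' : measurableType d') (R : realType)
  (mu : {measure set T -> \bar R}) (D : set T) (mD : measurable D)
  (V : T -> T') (mV : measurable_fun setT V) (F : T' -> \bar R) :
  (forall v, 0 <= F v)%E -> measurable_fun setT F ->
  (\int[pushf (mrestr mu mD) mV]_v F v = \int[mu]_(w in D) F (V w))%E.
Proof.
move=> F0 mF.
have c0 : forall w, (0 <= (\1_D w)%:E :> \bar R)%E by move=> w; rewrite lee_fin.
have cfin : forall w, ((\1_D w)%:E : \bar R) \is a fin_num by [].
have mc : measurable_fun setT (fun w => ((\1_D w)%:E : \bar R)).
  by apply/measurable_EFinP; exact: measurable_indic.
have ml : forall U, measurable U ->
    measurable_fun setT ((fun w => (\d_(V w) : {measure set T' -> \bar R})) ^~ U).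
  move=> U mU /=; under eq_fun do rewrite diracE.
  apply/measurable_EFinP.
  exact: (measurableT_comp (measurable_indic mU) mV).
have hnu : forall U, measurable U -> pushf (mrestr mu mD) mV U =
    (\int[mu]_x ((\1_D x)%:E * \d_(V x) U))%E.
  move=> U mU; rewrite pushfE /mrestr.
  transitivity (\int[mu]_x (\1_(V @^-1` U `&` D) x)%:E)%E; last first.
    apply: eq_integral => x _; rewrite diracE !indicE -EFinM; congr (_%:E).
    rewrite in_setI andbC.
    by case: (x \in D); rewrite ?mul1r ?mul0r.
  rewrite integral_indic ?setIT //.
  by apply: measurableI => //; rewrite -[_ @^-1` _]setTI; exact: mV.
rewrite (mix_integral c0 cfin mc ml hnu F F0 mF) [RHS]int_in_indic.
apply: eq_integral => w _; rewrite integral_dirac //= diracT mul1e //.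
Qed.

Arguments RP {d d' T T' R mu D} mD {V} mV {F}.
Section chain.
Local Open Scope ereal_scope.
Context (R : realType) (k : nat) (dO : measure_display) (Omega : measurableType dO)
  (P : probability Omega R) (dY : measure_display) (TY : measurableType dY)
  (Y : Omega -> TY) (Z1 : Omega -> k.-tuple R) (dW : measure_display)
  (TW : measurableType dW) (W : Omega -> TW)
  (q1 : TY -> probability (k.-tuple R) R)
  (kap : (k.-tuple R * TY)%type -> probability TW R).
Hypotheses (mY : measurable_fun setT Y) (mZ1 : measurable_fun setT Z1)
  (mW : measurable_fun setT W).
Hypothesis hq1 : is_cond_law P Y Z1 (fun y => q1 y).
Hypothesis hkap : is_cond_law P (fun w => (Z1 w, Y w)) W (fun zy => kap zy).
Variable h : TW -> \bar R.
Hypotheses (h0 : forall x, 0 <= h x) (mh : measurable_fun setT h).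

Let V := fun w => (Z1 w, Y w).
Let mV : measurable_fun setT V := measurable_fun_pair mZ1 mY.
Let F := fun v => \int[kap v]_x h x.
Let mF : measurable_fun setT F.
Proof.
exact: (@measurable_fun_integral_kernel _ _ _ _ _
  (fun v => kap v : {measure set TW -> \bar R}) hkap.1 h h0 mh).
Qed.
Let F0 v : 0 <= F v.
Proof. by apply: integral_ge0 => x _. Qed.

Lemma chain_meas :
  measurable_fun setT (fun y => \int[q1 y]_z \int[kap (z, y)]_x h x).
Proof.
have H := (measurable_int_q hq1.1 (fun yz => F (yz.2, yz.1)) (fun _ => F0 _)
  (measurableT_comp mF (@measurable_swap _ _ _ _))).
exact: H.
Qed.

Lemma chain_eq C : measurable C ->
  \int[pushforward P Y]_(y in C) (\int[q1 y]_z \int[kap (z, y)]_x h x)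
  = \int[P]_(w in Y @^-1` C) h (W w).
Proof.
move=> mC.
have mYC : measurable (Y @^-1` C) by rewrite -[_ @^-1` _]setTI; exact: mY.
pose PY := pushf P mY.
pose c := fun y => (\1_C y)%:E : \bar R.
have c0 y : 0 <= c y by rewrite lee_fin.
have cfin y : c y \is a fin_num by [].
have mc : measurable_fun setT c.
  by apply/measurable_EFinP; exact: measurable_indic.
have mpair (y : TY) : measurable_fun setT (fun z : k.-tuple R => (z, y)).
  exact: pair2_measurable.
pose l := fun y => pushf (q1 y) (mpair y).
have ml : forall U, measurable U -> measurable_fun setT (l ^~ U).
  move=> U mU.
  have mk : measurable_fun setT
      (fun yz : TY * k.-tuple R => (\1_U (yz.2, yz.1))%:E : \bar R).
    apply/measurable_EFinP.
    exact: (measurableT_comp (measurable_indic mU) (@measurable_swap _ _ _ _)).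
  have k0 : forall yz : TY * k.-tuple R, 0 <= (\1_U (yz.2, yz.1))%:E :> \bar R.
    by move=> yz; rewrite lee_fin.
  have -> : (l ^~ U) = (fun y => \int[q1 y]_z (\1_U (z, y))%:E).
    apply/funext => y /=.
    have mpre : measurable ((pair^~ y) @^-1` U).
      by rewrite -[X in measurable X]setTI; exact: (mpair y measurableT U mU).
    rewrite /l pushfE; last exact: (mpair y).
    transitivity (q1 y (pair^~ y @^-1` U `&` setT)); first by rewrite setIT.
    rewrite -integral_indic //.
  exact: (measurable_int_q hq1.1 _ k0 mk).
pose nu := mixm PY c l c0 cfin mc ml.
have hnu : forall U, measurable U -> nu U = \int[PY]_y (c y * l y U).
  by move=> U _; exact: mixmE.
pose nu' := pushf (mrestr P mYC) mV.
have nunu' : forall D, measurable D -> nu' D = nu D.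
  apply: prod_measure_eq.
    rewrite pushfE /mrestr; apply: (le_lt_trans (probability_le1 P _)); last exact: ltry.
    apply: measurableI => //; rewrite -[_ @^-1` _]setTI; exact: mV.
  move=> A B mA mB.
  rewrite pushfE /mrestr hnu; last exact: measurableX.
  transitivity (P (Y @^-1` (B `&` C) `&` Z1 @^-1` A)).
    by congr (P _); apply/seteqP; split => w /=; rewrite /V /=; tauto.
  rewrite hq1.2 //; last exact: measurableI.
  transitivity (\int[PY]_(v in B `&` C) q1 v A); first by [].
  rewrite [LHS]int_in_indic; apply: eq_integral => y _.
  rewrite /c pushfE !indicE.
  have -> : (pair^~ y @^-1` (A `*` B)) = if y \in B then A else set0.
    case: ifPn => yB; apply/seteqP; split => z /=.
    - by case.
    - by move=> Az; split => //; exact/set_mem.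
    - by move=> [_ By]; apply: (negP yB); exact/mem_set.
    - by [].
  rewrite in_setI.
  case: (y \in B); case: (y \in C); rewrite /= ?measure0 ?mul1e ?mul0e ?mule0 //.
transitivity (\int[PY]_(y in C) (\int[q1 y]_z \int[kap (z, y)]_x h x)); first by [].
rewrite [LHS]int_in_indic.
transitivity (\int[PY]_y (c y * \int[l y]_v F v)).
  apply: eq_integral => y _; congr (_ * _).
  transitivity (\int[pushforward (q1 y) (pair^~ y)]_(v in setT) F v); last by [].
  by rewrite (ge0_integral_pushforward (mpair y)).
rewrite -(mix_integral c0 cfin mc ml hnu F F0 mF).
rewrite (eq_measure_integral nu'); last by move=> A mA _; rewrite nunu'.
rewrite RP //.
rewrite -(RP mYC mW h0 mh).
pose c2 := fun w => (\1_(Y @^-1` C) w)%:E : \bar R.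
have c20 w : 0 <= c2 w by rewrite lee_fin.
have c2fin w : c2 w \is a fin_num by [].
have mc2 : measurable_fun setT c2.
  by apply/measurable_EFinP; exact: measurable_indic.
have ml2 : forall U, measurable U -> measurable_fun setT
    ((fun w => kap (V w) : {measure set TW -> \bar R}) ^~ U).
  by move=> U mU; exact: (measurableT_comp (hkap.1 U mU) mV).
have hnu2 : forall U, measurable U -> pushf (mrestr P mYC) mW U =
    \int[P]_w (c2 w * kap (V w) U).
  move=> U mU; rewrite pushfE /mrestr.
  pose C' := [set v : k.-tuple R * TY | C v.2].
  have mC' : measurable C'.
    have -> : C' = setT `*` C by apply/seteqP; split => v /=; tauto.
    exact: measurableX.
  transitivity (P (V @^-1` C' `&` W @^-1` U)).
    by congr (P _); apply/seteqP; split => w /=; rewrite /V /=; tauto.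
  rewrite hkap.2 // ge0_integral_pushforward //.
  - by rewrite /c2 -int_in_indic.
  - by apply: measurable_funTS; exact: (hkap.1 U mU).
rewrite (mix_integral c20 c2fin mc2 ml2 hnu2 h h0 mh) int_in_indic.
by apply: eq_integral => w _.
Qed.

End chain.
Arguments chain_eq {R k dO Omega P dY TY Y Z1 dW TW W q1 kap} mY mZ1 mW hq1 hkap {h} h0 mh {C}.
Arguments chain_meas {R k dO Omega P dY TY Y Z1 dW TW W q1 kap} hq1 hkap {h} h0 mh.
Lemma final_step (R : realType) (n k : nat)
  (dO : measure_display) (Omega : measurableType dO) (P : probability Omega R)
  (dY : measure_display) (TY : measurableType dY) (Tm : eqType) (sigma : Tm -> R)
  (X0 : Omega -> n.-tuple R) (Y : Omega -> TY) (Z : Tm -> Omega -> k.-tuple R)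
  (Enc : n.-tuple R -> k.-tuple R)
  (g : probability (k.-tuple R) R) (kY : n.-tuple R -> probability TY R) (t2 : Tm) :
  measurable_fun setT X0 -> measurable_fun setT Y -> measurable_fun setT Enc ->
  (forall C, measurable C -> measurable_fun setT (fun x => kY x C)) ->
  latent_model P sigma X0 Y Z Enc g (fun x => kY x) ->
  forall C B, measurable C -> measurable B ->
  P (Y @^-1` C `&` Z t2 @^-1` B) =
  (\int[P]_(w in Y @^-1` C) gaussN g (Enc (X0 w)) (sigma t2) B)%E.
Proof.
move=> mX0 mY mEnc hkY hlat C B mC mB.
have mYC : measurable (Y @^-1` C) by rewrite -[_ @^-1` _]setTI; exact: mY.
pose G := fun x => gaussN g (Enc x) (sigma t2) B.
have G0 x : (0 <= G x)%E by [].
have mG : measurable_fun setT G.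
  exact: (measurableT_comp (measurable_gaussN _ _ g (sigma t2) _ mB) mEnc).
transitivity (\int[P]_(w in Y @^-1` C) G (X0 w))%E; last by [].
rewrite -(RP mYC mX0 G0 mG).
pose PX := pushf P mX0.
pose c := fun x => kY x C.
have c0 x : (0 <= c x)%E by [].
have cfin x : c x \is a fin_num.
  rewrite ge0_fin_numE //; apply: (le_lt_trans (probability_le1 _ mC)).
  exact: ltry.
have ml : forall U, measurable U ->
    measurable_fun setT ((fun x => (\d_x : {measure set (n.-tuple R) -> \bar R})) ^~ U).
  move=> U mU /=; under eq_fun do rewrite diracE.
  by apply/measurable_EFinP; exact: measurable_indic.
have hnu : forall U, measurable U -> pushf (mrestr P mYC) mX0 U =
    (\int[PX]_x (c x * \d_x U))%E.
  move=> U mU; rewrite pushfE /mrestr.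
  transitivity (P (X0 @^-1` U `&` Y @^-1` C `&`
      [set w | forall t, t \in [::] -> (fun _ => setT) t (Z t w)])).
    by congr (P _); apply/seteqP; split => w /=; tauto.
  rewrite (hlat [::] erefl U C (fun _ => setT) mU mC (fun _ => measurableT)).
  transitivity (\int[PX]_(x in U) (kY x C * \prod_(t <- [::])
      gaussN g (Enc x) (sigma t) setT))%E; first by [].
  rewrite int_in_indic; apply: eq_integral => x _.
  by rewrite big_nil diracE mule1 muleC.
rewrite (mix_integral c0 cfin (hkY C mC) ml hnu G G0 mG).
transitivity (P (X0 @^-1` setT `&` Y @^-1` C `&`
    [set w | forall t, t \in [:: t2] -> (fun _ => B) t (Z t w)])).
  congr (P _); apply/seteqP; split => w /=.
    by move=> [Cw Bw]; split => // t; rewrite mem_seq1 => /eqP ->.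
  by move=> [[_ Cw] Bw]; split => //; apply: Bw; rewrite mem_seq1.
rewrite (hlat [:: t2] erefl setT C (fun _ => B) measurableT mC (fun _ => mB)).
transitivity (\int[PX]_(x in setT) (kY x C * \prod_(t <- [:: t2])
    gaussN g (Enc x) (sigma t) B))%E; first by [].
apply: eq_integral => x _.
by rewrite big_seq1 integral_dirac //= diracT mul1e.
Qed.
Arguments final_step {R n k dO Omega P dY TY Tm sigma X0 Y Z Enc g kY t2}.
Theorem proposition2 (R : realType) (n k : nat)
  (dO : measure_display) (Omega : measurableType dO) (P : probability Omega R)
  (dY : measure_display) (TY : measurableType dY) (Tm : eqType) (sigma : Tm -> R)
  (X0 : Omega -> n.-tuple R) (Y : Omega -> TY) (Z : Tm -> Omega -> k.-tuple R)
  (Enc : n.-tuple R -> k.-tuple R)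
  (g : probability (k.-tuple R) R) (kY : n.-tuple R -> probability TY R)
  (t1 t2 : Tm)
  (q1 : TY -> probability (k.-tuple R) R)
  (r : (k.-tuple R * TY)%type -> probability (n.-tuple R) R)
  (r0 : (k.-tuple R * TY)%type -> probability (k.-tuple R) R) :
  (forall t, 0 <= sigma t) ->
  measurable_fun setT X0 -> measurable_fun setT Y ->
  (forall t, measurable_fun setT (Z t)) -> measurable_fun setT Enc ->
  std_gaussian g ->
  (forall C, measurable C -> measurable_fun setT (fun x => kY x C)) ->
  latent_model P sigma X0 Y Z Enc g (fun x => kY x) ->
  (* q1 y = p(z_t1 | y) *)
  is_cond_law P Y (Z t1) (fun y => q1 y) ->
  (* r (z, y) = p(x0 | z_t1 = z, y) *)
  is_cond_law P (fun w => (Z t1 w, Y w)) X0 (fun zy => r zy) ->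
  (* r0 (z, y) = p(z0 | z_t1 = z, y), with z0 = Enc x0 *)
  is_cond_law P (fun w => (Z t1 w, Y w)) (fun w => Enc (X0 w)) (fun zy => r0 zy) ->
  (* (i) *)
  is_cond_law P Y (Z t2)
    (fun y B => \int[q1 y]_z1 \int[r (z1, y)]_x0 gaussN g (Enc x0) (sigma t2) B)%E
  /\
  (* (ii) *)
  is_cond_law P Y (Z t2)
    (fun y B => \int[q1 y]_z1 \int[r0 (z1, y)]_z0 gaussN g z0 (sigma t2) B)%E.
Proof.
move=> hsig mX0 mY mZ mEnc hg hkY hlat hq1 hr hr0.
have mEX0 : measurable_fun setT (fun w => Enc (X0 w)) := measurableT_comp mEnc mX0.
split; split.
- move=> B mB.
  exact: (chain_meas hq1 hr (h := fun x0 => gaussN g (Enc x0) (sigma t2) B)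
    (fun _ => measure_ge0 _ _)
    (measurableT_comp (measurable_gaussN _ _ g (sigma t2) _ mB) mEnc)).
- move=> C B mC mB.
  transitivity (\int[P]_(w in Y @^-1` C) gaussN g (Enc (X0 w)) (sigma t2) B)%E.
    exact: (final_step (t2 := t2) mX0 mY mEnc hkY hlat C B mC mB).
  symmetry.
  exact: (chain_eq mY (mZ t1) mX0 hq1 hr
    (h := fun x0 => gaussN g (Enc x0) (sigma t2) B)
    (fun _ => measure_ge0 _ _)
    (measurableT_comp (measurable_gaussN _ _ g (sigma t2) _ mB) mEnc) mC).
- move=> B mB.
  exact: (chain_meas hq1 hr0 (h := fun z0 => gaussN g z0 (sigma t2) B)
    (fun _ => measure_ge0 _ _) (measurable_gaussN _ _ g (sigma t2) _ mB)).
- move=> C B mC mB.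
  transitivity (\int[P]_(w in Y @^-1` C) gaussN g (Enc (X0 w)) (sigma t2) B)%E.
    exact: (final_step (t2 := t2) mX0 mY mEnc hkY hlat C B mC mB).
  symmetry.
  exact: (chain_eq mY (mZ t1) mEX0 hq1 hr0
    (h := fun z0 => gaussN g z0 (sigma t2) B)
    (fun _ => measure_ge0 _ _) (measurable_gaussN _ _ g (sigma t2) _ mB) mC).
Qed.
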